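(* Let $G$ be a finite group and $S$ an inverse-closed, normal multiset of elements of $G\setminus\{1\}$. Let $\overline{S}$ be the underlying set of $S$ (obtained by removing repeated elements), let $\Gamma=\operatorname{Cay}(G,S)$ be the Cayley multigraph and $\overline{\Gamma}=\operatorname{Cay}(G,\overline{S})$ the Cayley graph. Then $\operatorname{Deg}(\overline{\Gamma})$ divides $\operatorname{Deg}(\Gamma)$.
   Context: $m_S(x)$ is the multiplicity of $x$ in $S$; inverse-closed means $m_S(x)=m_S(x^{-1})$, normal means $m_S(gxg^{-1})=m_S(x)$ for all $g,x\in G$. $\operatorname{Cay}(G,S)$ has vertex set $G$ and adjacency matrix with $(x,y)$-entry $m_S(xy^{-1})$ (for a set, entries in $\{0,1\}$). $\operatorname{Deg}$ denotes the degree over $\mathbb{Q}$ of the smallest subfield of $\mathbb{C}$ containing all adjacency eigenvalues. *)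

(* Defs.v *)
From HB Require Import structures.
From mathcomp Require Import all_boot all_order all_algebra all_fingroup all_field.
Set Implicit Arguments. Unset Strict Implicit. Unset Printing Implicit Defensive.
Import GRing.Theory Num.Theory.
Local Open Scope ring_scope.

(* A multiset of group elements is given by its multiplicity function
   m : gT -> nat  (m x = multiplicity m_S(x) of x in S). *)

Definition cay_adj (gT : finGroupType) (m : gT -> nat) : 'M[algC]_#|gT| :=
  \matrix_(i, j) (m (enum_val i * (enum_val j)^-1)%g)%:R.

Definition underlying_set (gT : finGroupType) (m : gT -> nat) : gT -> nat :=
  fun x => nat_of_bool (m x != 0%N).

Definition eigenvalues n (A : 'M[algC]_n) : seq algC :=
  sval (closed_field_poly_normal (char_poly A)).

(* Degree over Q of the smallest subfield of C containing all elements of s: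
   the Q-dimension of a number field Qs together with an embedding
   Qs -> algC whose image is Q(s) (Qs = Q(s1), map QsC s1 = s). *)
Definition field_degree (s : seq algC) : nat :=
  \dim {: projT1 (num_field_exists s)}%VS.

Definition Deg n (A : 'M[algC]_n) : nat := field_degree (eigenvalues A).

(* Main.v *)
Require Import Defs.
From HB Require Import structures.
From mathcomp Require Import all_boot all_order all_algebra all_fingroup all_field all_solvable all_character.
Set Implicit Arguments. Unset Strict Implicit. Unset Printing Implicit Defensive.
Import GRing.Theory Num.Theory.
Local Open Scope ring_scope.

Lemma chi_tr (gT : finGroupType) (i : Iirr [set: gT]) x :
  'chi_i x = \tr ('Chi_i x).
Proof. by rewrite -irrRepr cfunE inE mulr1n. Qed.

Lemma chi_central (gT : finGroupType) (f : gT -> algC)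
  (fJ : forall g x : gT, f (g * x * g^-1)%g = f x) (i : Iirr [set: gT]) y :
  \sum_x f x * 'chi_i (x * y)%g = (\sum_x f x * 'chi_i x) / 'chi_i 1%g * 'chi_i y.
Proof.
pose M := \sum_x f x *: 'Chi_i x.
have cM : centgmx 'Chi_i M.
  apply/centgmxP => g _.
  rewrite /M mulmx_suml mulmx_sumr [RHS](reindex_inj (@conjg_inj _ g)) /=.
  apply: eq_bigr => x _.
  rewrite -scalemxAl -scalemxAr -!repr_mxM ?inE //.
  have -> : f (x ^ g)%g = f x by have := fJ (g^-1)%g x; rewrite invgK /conjg mulgA.
  by rewrite /conjg !mulgA mulgV mul1g.
have /is_scalar_mxP[e De] := mx_abs_irr_cent_scalar (groupC (socle_irr _)) cM.
have key z : \sum_x f x * 'chi_i (x * z)%g = e * 'chi_i z.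
  rewrite [in RHS]chi_tr -mxtraceZ -mul_scalar_mx -De /M mulmx_suml raddf_sum.
  apply: eq_bigr => x _; rewrite /= -scalemxAl mxtraceZ -repr_mxM ?inE //.
  by rewrite chi_tr.
have e1 : e = (\sum_x f x * 'chi_i x) / 'chi_i 1%g.
  have k1 := key 1%g.
  rewrite (eq_bigr (fun x => f x * 'chi_i x)) in k1; last by move=> x _; rewrite mulg1.
  by rewrite k1 mulfK ?irr1_neq0.
by rewrite key e1.
Qed.

Lemma sum_enum (gT : finGroupType) (F : gT -> algC) :
  \sum_(k < #|gT|) F (enum_val k) = \sum_x F x.
Proof. by rewrite -big_enum_val. Qed.

Definition omg (gT : finGroupType) (f : gT -> algC) (i : Iirr [set: gT]) :=
  (\sum_x f x * 'chi_i x) / 'chi_i 1%g.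
Definition adjf (gT : finGroupType) (f : gT -> algC) : 'M[algC]_#|gT| :=
  \matrix_(i, j) f (enum_val i * (enum_val j)^-1)%g.

Lemma chiC (gT : finGroupType) (i : Iirr [set: gT]) (a b : gT) :
  'chi_i (a * b)%g = 'chi_i (b * a)%g.
Proof.
rewrite -(cfunJ _ (a * b)%g (y := a)) ?inE //.
by rewrite /conjg !mulgA mulVg mul1g.
Qed.

Lemma eig_omg (gT : finGroupType) (f : gT -> algC)
  (fJ : forall g x : gT, f (g * x * g^-1)%g = f x) (i : Iirr [set: gT]) :
  eigenvalue (adjf f) (omg f i).
Proof.
apply/eigenvalueP; exists (\row_j 'chi_i (enum_val j)); last first.
  apply/eqP => /rowP /(_ (enum_rank 1%g)); rewrite !mxE enum_rankK.
  by apply/eqP; apply: irr1_neq0.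
apply/rowP => j; rewrite !mxE.
rewrite (eq_bigr (fun k => (fun x => 'chi_i x * f (x * (enum_val j)^-1)%g) (enum_val k))); last first.
  by move=> k _; rewrite !mxE.
rewrite (@sum_enum gT (fun x => 'chi_i x * f (x * (enum_val j)^-1)%g)) (reindex_inj (mulIg (enum_val j))) /=.
rewrite -chi_central //; apply: eq_bigr => x _.
by rewrite mulgK mulrC.
Qed.

Lemma eig_omg_inv (gT : finGroupType) (f : gT -> algC)
  (fJ : forall g x : gT, f (g * x * g^-1)%g = f x) (l : algC) :
  eigenvalue (adjf f) l -> exists i, l = omg f i.
Proof.
case/eigenvalueP => v Dv nzv.
pose V x := v 0 (enum_rank x).
have DV z : \sum_x V x * f (x * z^-1)%g = l * V z.
  have := congr1 (fun w : 'rV[algC]_#|gT| => w 0 (enum_rank z)) Dv; rewrite /= !mxE => <-.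
  rewrite -(@sum_enum gT (fun x => V x * f (x * z^-1)%g)).
  by apply: eq_bigr => k _; rewrite !mxE /V enum_valK enum_rankK.
pose P (i : Iirr [set: gT]) y := \sum_x V x * 'chi_i (x^-1 * y)%g.
have P1 i y : \sum_z (\sum_x V x * f (x * z^-1)%g) * 'chi_i (z^-1 * y)%g
              = omg f i * P i y.
  under eq_bigr do rewrite mulr_suml.
  rewrite exchange_big /P mulr_sumr; apply: eq_bigr => x _.
  under eq_bigr do rewrite -mulrA.
  rewrite -mulr_sumr mulrCA; congr (_ * _).
  rewrite (reindex_inj (mulIg x)) /=.
  rewrite (reindex_inj invg_inj) /=.
  transitivity (\sum_t f t * 'chi_i (t * (y * x^-1))%g).
    apply: eq_bigr => t _.
    rewrite invMg invgK mulgA mulgV mul1g.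
    by rewrite -mulgA chiC !mulgA.
  by rewrite chi_central // /omg chiC.
have P2 i y : \sum_z (\sum_x V x * f (x * z^-1)%g) * 'chi_i (z^-1 * y)%g
              = l * P i y.
  by rewrite /P mulr_sumr; apply: eq_bigr => z _; rewrite DV mulrA.
have P3 y : \sum_i 'chi_i 1%g * P i y = #|[set: gT]|%:R * V y.
  rewrite /P; under eq_bigr do rewrite mulr_sumr.
  rewrite exchange_big /= (bigD1 y) //= [X in _ + X]big1 ?addr0.
    under eq_bigr do rewrite mulrCA.
    rewrite -mulr_sumr mulVg mulrC; congr (_ * _).
    have := cfRegE [set: gT]%G 1%g; rewrite cfReg_sum sum_cfunE eqxx mulr1n.
    move=> <-; apply: eq_bigr => i _.
    by rewrite cfunE.
  move=> x nxy; under eq_bigr do rewrite mulrCA.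
  rewrite -mulr_sumr.
  have := cfRegE [set: gT]%G (x^-1 * y)%g; rewrite cfReg_sum sum_cfunE.
  rewrite -eq_mulVg1 (negbTE nxy) mulr0n => H.
  suff -> : \sum_(i : Iirr [set: gT]) 'chi_i 1%g * 'chi_i (x^-1 * y)%g = 0 by rewrite mulr0.
  by rewrite -[RHS]H; apply: eq_bigr => i _; rewrite cfunE.
have [j nzj] : exists j, v 0 j != 0.
  apply/existsP; apply: contraR nzv => /existsPn H; apply/eqP/rowP => j.
  by rewrite mxE; apply/eqP; move: (H j); rewrite negbK.
pose y := enum_val j.
have nzVy : V y != 0 by rewrite /V /y enum_valK.
have [i /eqP Hi | none] := pickP (fun i => l == omg f i); first by exists i.
exfalso; move: nzVy; apply/negP; rewrite negbK.
have := P3 y; rewrite big1.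
  by move/esym/eqP; rewrite mulf_eq0 (negbTE (neq0CG [set: gT]%G)).
move=> i _.
have : (l - omg f i) * P i y = 0 by rewrite mulrBl -P1 -P2 subrr.
move/eqP; rewrite mulf_eq0 subr_eq0 (_ : (l == omg f i) = false) /=; last exact: none i.
move=> /eqP ->.
by rewrite mulr0.
Qed.


Lemma mem_eigenvalues n (A : 'M[algC]_n) x :
  (x \in eigenvalues A) = root (char_poly A) x.
Proof.
rewrite /eigenvalues; case: closed_field_poly_normal => r /= Hr.
rewrite [in RHS]Hr (monicP (char_poly_monic A)) scale1r.
by rewrite root_prod_XsubC.
Qed.



Lemma conj_pow n (B D : 'M[algC]_n) k : B \in unitmx ->
  (invmx B *m D *m B) ^+ k.+1 = invmx B *m D ^+ k.+1 *m B.
Proof.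
move=> uB; elim: k => [|k IH]; first by rewrite !expr1.
by rewrite exprS IH [in RHS]exprS -!mulmxE !mulmxA mulmxK.
Qed.

Lemma diag_powS n (e : 'rV[algC]_n) k :
  diag_mx e ^+ k.+1 = diag_mx (\row_j e 0 j ^+ k.+1).
Proof.
elim: k => [|k IH].
  by rewrite expr1; congr diag_mx; apply/rowP => j; rewrite mxE expr1.
rewrite exprS IH -mulmxE mulmx_diag; congr diag_mx; apply/rowP => j.
by rewrite !mxE [RHS]exprS.
Qed.

Lemma aut_chi (gT : finGroupType) (nu : {rmorphism algC -> algC}) n k
  (Hnu : forall z, z ^+ n = 1 -> nu z = z ^+ k) (i : Iirr [set: gT]) (x : gT) :
  (#[x]%g %| n)%N -> nu ('chi_i x) = 'chi_i (x ^+ k)%g.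
Proof.
move=> dvx.
have [e [[B uB Dx] [e1 _] [chix _] _]] := repr_rsim_diag 'Chi_i (in_setT x).
rewrite -irrRepr chix rmorph_sum.
have en j : e 0 j ^+ n = 1 by case/dvdnP: dvx => q ->; rewrite mulnC exprM e1 expr1n.
rewrite (eq_bigr (fun j => e 0 j ^+ k)); last by move=> j _; rewrite Hnu ?en.
rewrite cfunE inE mulr1n.
clear Hnu; case: k => [|k].
  by rewrite expg0 repr_mx1 mxtrace1; under eq_bigr do rewrite expr0; rewrite sumr_const card_ord.
have -> : 'Chi_i (x ^+ k.+1)%g = 'Chi_i x ^+ k.+1.
  elim: k => [|k IH]; first by rewrite expg1 expr1.
  by rewrite expgS repr_mxM ?inE // IH [RHS]exprS -mulmxE.
rewrite Dx conj_pow // mxtrace_mulC mulmxA mulmxV // mul1mx diag_powS mxtrace_diag.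
by apply: eq_bigr => j _; rewrite mxE.
Qed.

Lemma class_zero (gT : finGroupType) (g : gT -> algC)
  (gJ : forall x y : gT, g (x ^ y)%g = g x) :
  (forall i : Iirr [set: gT], \sum_x g x * 'chi_i x = 0) -> forall x, g x = 0.
Proof.
move=> H x.
have cf : is_class_fun <<[set: gT]>>%g [ffun x => g x].
  rewrite genGid; apply: intro_class_fun => [y z _ _|y]; [exact: gJ | by rewrite inE].
pose phi : 'CF([set: gT]) := Cfun 0 cf.
have -> : g x = phi x by rewrite cfunE.
rewrite (cfun_sum_cfdot phi) sum_cfunE big1 // => i _.
rewrite cfunE cfdotE.
suff -> : \sum_(y in [set: gT]) phi y * ('chi_i y)^* = 0 by rewrite mulr0 mul0r.
transitivity (\sum_x g x * 'chi_(conjC_Iirr i) x); last exact: H.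
apply: eq_big => [y|y _]; first by rewrite inE.
by rewrite conjC_IirrE !cfunE.
Qed.


Lemma adjoin_P (L : fieldExtType rat) (P : L -> Prop)
  (PD : forall x y, P x -> P y -> P (x + y))
  (PM : forall x y, P x -> P y -> P (x * y))
  (P1 : forall c : rat, P (c%:A)) :
  forall (xs : seq L) (E : {subfield L}), (forall x, x \in E -> P x) ->
  (forall x, x \in xs -> P x) -> forall x, x \in <<E & xs>>%VS -> P x.
Proof.
have P0 : P 0 by have := P1 0; rewrite scale0r.
have Pone : P 1 by have := P1 1; rewrite scale1r.
elim=> [|z xs IH] E PE Pxs x.
  by rewrite adjoin_nil subfield_closed; apply: PE.
rewrite adjoin_cons => Hx.
apply: (IH <<E; z>>%AS) Hx => [y Hy|y Hy]; last first.
  by apply: Pxs; rewrite inE Hy orbT.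
rewrite -(Fadjoin_poly_eq Hy) horner_coef.
apply: (big_ind P) => // i _; apply: (PM).
  by apply: (PE); apply: (polyOverP (Fadjoin_polyOver E z y)).
have Pz : P z by apply: Pxs; rewrite mem_head.
elim: (nat_of_ord i) => [|j IHj]; first by rewrite expr0.
by rewrite exprS; apply: (PM).
Qed.

Lemma dim_div (Qs L : fieldExtType rat) (QsC : {rmorphism Qs -> algC})
  (LC : {rmorphism L -> algC}) (s1 : seq Qs) :
  <<1 & s1>>%VS = fullv -> (forall x, x \in s1 -> exists y, QsC x = LC y) ->
  (\dim {:Qs} %| \dim {:L})%N.
Proof.
move=> gen Hs.
have ex x : exists y, QsC x == LC y.
  have : x \in <<1 & s1>>%VS by rewrite gen memvf.
  suff : forall x, x \in <<1 & s1>>%VS -> exists y, QsC x = LC y.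
    by move=> H /H [y Hy]; exists y; apply/eqP.
  apply: (adjoin_P (P := fun x => exists y, QsC x = LC y)).
  - by move=> a b [y1 H1] [y2 H2]; exists (y1 + y2); rewrite !rmorphD H1 H2.
  - by move=> a b [y1 H1] [y2 H2]; exists (y1 * y2); rewrite !rmorphM H1 H2.
  - by move=> c; exists c%:A; rewrite !alg_num_field !fmorph_rat.
  - by move=> a /vlineP [c ->]; exists c%:A; rewrite !alg_num_field !fmorph_rat.
  - exact: Hs.
pose g x := xchoose (ex x).
have gP x : QsC x = LC (g x) by apply/eqP; exact: (xchooseP (ex x)).
have ginj y1 y2 : g y1 = g y2 -> y1 = y2.
  by move=> E; apply: (fmorph_inj QsC); rewrite !gP E.
have ga : zmod_morphism g.
  by move=> a b; apply: (fmorph_inj LC); rewrite -!gP !rmorphB -!gP.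
have g1 : g 1 = 1 by apply: (fmorph_inj LC); rewrite -gP !rmorph1.
have gM a b : g (a * b) = g a * g b.
  by apply: (fmorph_inj LC); rewrite -!gP !rmorphM -!gP.
have gs : scalable g.
  by move=> a b; apply: (fmorph_inj LC); rewrite -gP !rmorphZ_num -gP.
pose gaM := GRing.isZmodMorphism.Build _ _ g ga.
pose gsM := GRing.isScalable.Build _ _ _ _ g gs.
pose gL : {linear Qs -> L} := HB.pack g gaM gsM.
pose lin := linfun gL.
pose K := (lin @: fullv)%VS.
have memK y : reflect (exists yy, y = g yy) (y \in K).
  apply: (iffP memv_imgP) => [[yy _ ->] | [yy ->]];
    by exists yy; rewrite ?lfunE ?memvf.
have algK : is_aspace K.
  rewrite /is_aspace has_algid1; last by apply/memK; exists 1; rewrite g1.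
  apply/prodvP=> _ _ /memK[y1 ->] /memK[y2 ->].
  by apply/memK; exists (y1 * y2); rewrite gM.
have ker0 : lker lin == 0%VS.
  by apply/lker0P => y1 y2; rewrite !lfunE; apply: ginj.
have dimK : \dim K = \dim {:Qs}.
  by rewrite limg_dim_eq // (eqP ker0) capv0.
rewrite -dimK.
exact: (field_dimS (F := ASpace algK) (E := aspacef L) (subvf _)).
Qed.


Lemma memE (gT : finGroupType) (f : gT -> algC)
  (fJ : forall g x : gT, f (g * x * g^-1)%g = f x) l :
  l \in eigenvalues (adjf f) <-> exists i, l = omg f i.
Proof.
rewrite mem_eigenvalues -eigenvalue_root_char; split; first exact: eig_omg_inv.
by case=> i ->; apply: eig_omg.
Qed.

Lemma sum_powk (gT : finGroupType) (h : gT -> algC) (i : Iirr [set: gT]) k k'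
  (Hk'k : forall x : gT, (x ^+ k' ^+ k)%g = x) :
  \sum_x h x * 'chi_i (x ^+ k)%g = \sum_x h (x ^+ k')%g * 'chi_i x.
Proof.
rewrite (reindex_inj (can_inj (g := fun x : gT => (x ^+ k)%g) Hk'k)) /=.
by apply: eq_bigr => x _; rewrite Hk'k.
Qed.

Lemma pow_inv (gT : finGroupType) n k : (0 < n)%N -> coprime k n ->
  {k' : nat | forall x : gT, (#[x]%g %| n)%N -> (x ^+ k' ^+ k)%g = x /\ (x ^+ k ^+ k')%g = x}.
Proof.
move=> n0 cop; exists (k ^ (totient n).-1)%N => x dx.
have kk : (k ^ (totient n).-1 * k = 1 %[mod n])%N.
  by rewrite -expnSr prednK ?totient_gt0 // cyclic.Euler_exp_totient.
have E : (x ^+ (k ^ (totient n).-1 * k)%N)%g = x.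
  rewrite -expg_mod_order -(modn_dvdm _ dx) kk modn_dvdm //.
  by rewrite expg_mod_order expg1.
by rewrite -!expgM E mulnC E.
Qed.

Lemma nat_classJ (gT : finGroupType) (m : gT -> nat)
  (mnormal : forall g x : gT, m (g * x * g^-1)%g = m x) x y : m (x ^ y)%g = m x.
Proof. by have := mnormal (y^-1)%g x; rewrite invgK /conjg mulgA. Qed.

Theorem mainTheorem13 (gT : finGroupType) (m : gT -> nat)
  (m1 : m 1%g = 0%N)
  (minv : forall x : gT, m (x^-1)%g = m x)
  (mnormal : forall g x : gT, m (g * x * g^-1)%g = m x) :
  (Deg (cay_adj (underlying_set m)) %| Deg (cay_adj m))%N.
Proof.
pose mb := underlying_set m.
have mbnormal : forall g x : gT, mb (g * x * g^-1)%g = mb x.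
  by move=> g x; rewrite /mb /underlying_set mnormal.
pose fm : gT -> algC := fun x => (m x)%:R.
pose fb : gT -> algC := fun x => (mb x)%:R.
have fmJ : forall g x : gT, fm (g * x * g^-1)%g = fm x by move=> g x; rewrite /fm mnormal.
have fbJ : forall g x : gT, fb (g * x * g^-1)%g = fb x by move=> g x; rewrite /fb mbnormal.
have -> : cay_adj m = adjf fm by [].
have -> : cay_adj (underlying_set m) = adjf fb by [].
rewrite /Deg /field_degree.
case: (num_field_exists (eigenvalues (adjf fm))) => Qs [QsC [s1 Ds _]] /=.
case: (num_field_exists (eigenvalues (adjf fb))) => Qb [QbC [b1 Db genb]] /=.
suff key : forall i, exists y, omg fb i = QsC y.
  apply: (dim_div (QsC := QbC) (LC := QsC) genb) => x xb.
  have : QbC x \in eigenvalues (adjf fb) by rewrite -Db map_f.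
  case/(memE fbJ) => i Hi; have [y Hy] := key i; by exists y; rewrite Hi Hy.
pose G := [set: gT]%G.
have [Qn galQn [QnC gQnC [w [prim_w genw] Qn_chi]]] := group_num_field_exists G.
pose cv (i : Iirr G) (x : gT) : Qn :=
  sval (Qn_chi _ G _ (irr_char i) x (order_dvdG (in_setT x))).
have cvP i x : QnC (cv i x) = 'chi_i x by rewrite /cv; case: (Qn_chi _ _ _ _ _ _).
pose aQ (h : gT -> nat) i := (\sum_x (h x)%:R * cv i x) / cv i 1%g.
have aQP h i : QnC (aQ h i) = omg (fun x => (h x)%:R) i.
  rewrite /aQ /omg fmorph_div rmorph_sum cvP; congr (_ / _).
  by apply: eq_bigr => x _; rewrite rmorphM rmorph_nat cvP.
pose as1 := [seq aQ m i | i <- enum (Iirr G)].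
pose K := <<1 & as1>>%AS.
have claimB : forall y, y \in K -> exists z, QnC y = QsC z.
  apply: (adjoin_P (P := fun y => exists z, QnC y = QsC z)).
  - by move=> a b [y1 H1] [y2 H2]; exists (y1 + y2); rewrite !rmorphD H1 H2.
  - by move=> a b [y1 H1] [y2 H2]; exists (y1 * y2); rewrite !rmorphM H1 H2.
  - by move=> c; exists c%:A; rewrite !alg_num_field !fmorph_rat.
  - by move=> a /vlineP [c ->]; exists c%:A; rewrite !alg_num_field !fmorph_rat.
  - move=> a /mapP [j _ ->].
    have : QnC (aQ m j) \in eigenvalues (adjf fm).
      by rewrite aQP; apply/(memE fmJ); exists j.
    by rewrite -Ds => /mapP [z _ ->]; exists z.
suff claimA : forall i, aQ mb i \in K.
  by move=> i; have [z Hz] := claimB _ (claimA i); exists z; rewrite -Hz aQP.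
pose n := #|G|.
have galK : galois K {:Qn}%AS.
  by apply: (galoisS _ galQn); rewrite sub1v subvf.
move=> i; rewrite -(galois_fixedField galK).
apply/fixedFieldP; first exact: memvf.
move=> sg sgK.
have sgfix a : a \in K -> sg a = a by move=> aK; apply: (fixed_gal (subvf K) sgK aK).
have [nu Dnu] := gQnC sg.
have prs : n.-primitive_root (sg w) by rewrite fmorph_primitive_root.
have [k Dk] := prim_rootP prim_w (prim_expr_order prs).
have cop : coprime k n by rewrite -(prim_root_exp_coprime k prim_w) -Dk.
have Hnu z : z ^+ n = 1 -> nu z = z ^+ k.
  move=> zn; have pwC : n.-primitive_root (QnC w) by rewrite fmorph_primitive_root.
  have [j ->] := prim_rootP pwC zn.
  by rewrite rmorphXn -Dnu Dk rmorphXn -!exprM mulnC.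
have nchi (j : Iirr G) (x : gT) : nu ('chi_j x) = 'chi_j (x ^+ k)%g.
  by apply: (aut_chi Hnu); apply: order_dvdG; rewrite inE.
have nuomg (h : gT -> nat) (j : Iirr G) : nu (omg (fun x => (h x)%:R) j)
    = (\sum_x (h x)%:R * 'chi_j (x ^+ k)%g) / 'chi_j 1%g.
  rewrite /omg fmorph_div rmorph_sum nchi expg1n; congr (_ / _).
  by apply: eq_bigr => x _; rewrite rmorphM rmorph_nat nchi.
have [k' Hk'] := pow_inv gT (cardG_gt0 G) cop.
have Hk'k (x : gT) : (x ^+ k' ^+ k)%g = x by case: (Hk' x (order_dvdG (in_setT x))).
have fixm (j : Iirr G) : nu (omg fm j) = omg fm j.
  have aK : aQ m j \in K.
    by apply: seqv_sub_adjoin; apply: map_f; rewrite mem_enum.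
  by rewrite -aQP -Dnu sgfix.
have Em x : m (x ^+ k')%g = m x.
  suff : fm (x ^+ k')%g - fm x = 0 by move/eqP; rewrite subr_eq0 eqr_nat => /eqP.
  apply: (class_zero (g := fun x => fm (x ^+ k')%g - fm x)) => [y z|j].
    by rewrite /= -conjXg /fm !(nat_classJ mnormal).
  have := fixm j; rewrite nuomg => /(congr1 (fun t => t * 'chi_j 1%g)).
  rewrite /omg !divfK ?irr1_neq0 // (sum_powk _ _ Hk'k) => E.
  under eq_bigr do rewrite mulrBl.
  by rewrite sumrB /fm E subrr.
apply: (fmorph_inj QnC); rewrite Dnu aQP nuomg /omg (sum_powk _ _ Hk'k).
congr (_ / _); apply: eq_bigr => x _.
by rewrite /mb /underlying_set Em.
Qed.
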